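(* For every positive integer $p$ and every $t\in\{0,\dots,p-1\}$: (1) there exists a $(3p-3t,\ p+3t)$-coloring of $H(3,2p)$ (with main eigenvalue $2p-3$); (2) there exists an $(8p-8t,\ p+8t)$-coloring of $H(4,3p)$ (with main eigenvalue $3p-4$).
   Context: The Hamming graph $H(n,q)$ has vertex set $\mathbb{Z}_q^n$, two vertices adjacent iff they differ in exactly one coordinate. A $(b,c)$-coloring of $H(n,q)$ is a surjective map onto $\{1,2\}$ in which each color-1 vertex has exactly $b$ neighbours of color 2 and each color-2 vertex has exactly $c$ neighbours of color 1; its main eigenvalue is $n(q-1)-(b+c)$. *)

(* Defs.v *)
From mathcomp Require Import all_boot all_order all_algebra.
Import GRing.Theory.
Set Implicit Arguments. Unset Strict Implicit. Unset Printing Implicit Defensive.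

(* Vertices of the Hamming graph H(n,q): words of length n over an alphabet of
   size q, i.e. functions 'I_n -> 'I_q (a model of Z_q^n; only the set matters). *)
Definition hvertex (n q : nat) := {ffun 'I_n -> 'I_q}.

Definition hdist (n q : nat) (x y : hvertex n q) : nat := #|[pred i | x i != y i]|.

Definition hadj (n q : nat) (x y : hvertex n q) : bool := hdist x y == 1.

(* A (b,c)-coloring of H(n,q): a surjective map onto {1,2} (here 'I_2 with
   color 1 = 0 and color 2 = 1) such that every color-1 vertex has exactly b
   neighbours of color 2 and every color-2 vertex has exactly c neighbours of
   color 1. *)
Definition is_bc_coloring (n q b c : nat) (f : hvertex n q -> 'I_2) : Prop :=
  (forall k : 'I_2, exists x, f x = k) /\
  (forall x, f x = ord0 -> #|[pred y | hadj x y && (f y == ord_max)]| = b) /\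
  (forall x, f x = ord_max -> #|[pred y | hadj x y && (f y == ord0)]| = c).

Definition main_eigenvalue (n q b c : nat) : int :=
  (Posz (n * (q - 1)%N) - Posz (b + c))%R.

(* Main.v *)
Require Import Defs.
From mathcomp Require Import all_boot all_order all_algebra.
From mathcomp Require Import zify.
Set Implicit Arguments. Unset Strict Implicit. Unset Printing Implicit Defensive.

Definition upd n q (x : hvertex n q) (i : 'I_n) (v : 'I_q) : hvertex n q :=
  [ffun k => if k == i then v else x k].

Lemma card_sumb (T : finType) (P : pred T) : #|P| = \sum_t (P t : nat).
Proof. rewrite -sum1_card big_mkcond /=; apply: eq_bigr => t _.
by rewrite unfold_in; case: (P t). Qed.

Lemma upd_same n q (x : hvertex n q) i : upd x i (x i) = x.
Proof. by apply/ffunP => k; rewrite ffunE; case: eqP => // ->. Qed.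

Lemma adj_upd n q (x y : hvertex n q) (i : 'I_n) :
  y i != x i -> hadj x y = (y == upd x i (y i)).
Proof.
move=> Hi; rewrite /hadj /hdist.
have Hi' : x i != y i by rewrite eq_sym.
rewrite (cardD1 i) inE Hi' /= add1n eqSS.
apply/idP/idP.
- move/eqP/card0_eq => H; apply/eqP/ffunP => k; rewrite ffunE.
  case: eqP => [->//|/eqP Hk]; move: (H k); rewrite !inE Hk /=.
  by case: eqP.
- move/eqP => Hy; apply/eqP; apply: eq_card0 => k; rewrite !inE.
  case: eqP => [->//|/eqP Hk] /=; rewrite Hy ffunE (negbTE Hk) /=.
  by rewrite eqxx.
Qed.

Lemma nbr_card n q (x : hvertex n q) (Q : pred (hvertex n q)) :
  #|[pred y | hadj x y && Q y]| =
  \sum_(i < n) #|[pred v : 'I_q | (v != x i) && Q (upd x i v)]|.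
Proof.
rewrite card_sumb.
transitivity (\sum_y \sum_(i < n) ((hadj x y && Q y) && (y i != x i) : nat)).
  apply: eq_bigr => y _ /=; case: (boolP (hadj x y)) => Ha /=; last by rewrite big1.
  case: (Q y) => /=; last by rewrite big1.
  move: Ha; rewrite /hadj /hdist card_sumb => /eqP <-.
  by apply: eq_bigr => i _; rewrite eq_sym.
rewrite exchange_big /=; apply: eq_bigr => i _.
rewrite -card_sumb card_sumb.
transitivity (#|[pred y | hadj x y && Q y && (y i != x i)]|); first by rewrite card_sumb.
rewrite -(card_image (f := upd x i)); last first.
  move=> v w /ffunP/(_ i); by rewrite !ffunE eqxx.
apply: eq_card => y; rewrite !inE.
apply/idP/imageP.
- move=> /andP [/andP [Ha HQ] Hi].
  have Hy : y = upd x i (y i) by apply/eqP; rewrite -(adj_upd Hi).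
  by exists (y i) => //; rewrite inE Hi /= -Hy.
- move=> [v]; rewrite inE => /andP [Hv HQ] ->.
  have Hvi : upd x i v i != x i by rewrite ffunE eqxx.
  rewrite HQ Hvi andbT (adj_upd Hvi).
  by rewrite andbT {2}/upd ffunE eqxx.
Qed.

Lemma deg_card n q (x : hvertex n q) : #|[pred y | hadj x y]| = n * q.-1.
Proof.
transitivity (#|[pred y | hadj x y && predT y]|); first by apply: eq_card => y; rewrite !inE andbT.
rewrite nbr_card.
transitivity (\sum_(i < n) q.-1); last by rewrite sum_nat_const card_ord.
apply: eq_bigr => i _.
transitivity (#|predC1 (x i)|); last by rewrite cardC1 card_ord.
apply: eq_card => v; by rewrite !inE andbT.
Qed.

Lemma cnt_split n q (x : hvertex n q) (Q : pred (hvertex n q)) i :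
  #|[pred v : 'I_q | (v != x i) && Q (upd x i v)]| + Q x =
  #|[pred v : 'I_q | Q (upd x i v)]|.
Proof.
rewrite [in RHS](cardD1 (x i)) inE upd_same addnC; congr (_ + _).
Qed.

Lemma sum_split (m p : nat) (F : nat -> nat) :
  \sum_(v < m * p) F v = \sum_(a < m) \sum_(r < p) F (a * p + r).
Proof.
elim: m => [|m IH]; first by rewrite !big_ord0.
rewrite mulSnr big_split_ord /= IH big_ord_recr /=.
by congr (_ + _).
Qed.

Lemma sum_lt (p s : nat) : \sum_(r < p) (r < s : nat) = minn s p.
Proof.
elim: p => [|p IH]; first by rewrite big_ord0 minn0.
rewrite big_ord_recr /= IH.
case: (ltnP p s) => h.
  by rewrite !minnE; lia.
by rewrite !minnE; lia.
Qed.

Lemma sum_shift (p s R : nat) : 0 < p -> s <= p ->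
  \sum_(r < p) ((r + R) %% p < s : nat) = s.
Proof.
move=> hp hs.
pose h (r : 'I_p) : 'I_p := Ordinal (ltn_pmod (r + R) hp).
have hinj : injective h.
  move=> r1 r2 /(congr1 val) /= /eqP; rewrite eqn_modDr !modn_small // => /eqP H.
  exact: val_inj.
rewrite -[RHS](minn_idPl hs) -sum_lt [RHS](reindex_inj hinj) /=.
by [].
Qed.

Definition kap n' q p (x : hvertex n'.+1 q) : nat -> nat := fun k => x (inord k) %/ p.
Definition iot n q p (x : hvertex n q) (j : 'I_n) : nat := \sum_(k < n | k != j) (x k %% p).
Definition gg n' q p s (P : nat -> (nat -> nat) -> bool) (j : 'I_n'.+1) (x : hvertex n'.+1 q) : bool :=
  P (val j) (kap p x) && (iot p x j %% p < s).
Definition ZZ n' q p s P (x : hvertex n'.+1 q) : bool := [exists j, gg p s P j x].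

Definition HP1 n (P : nat -> (nat -> nat) -> bool) :=
  forall j, j < n -> forall a b, (forall k, k < n -> k != j -> a k = b k) -> P j a = P j b.
Definition bounded n m (a : nat -> nat) := forall k, k < n -> a k < m.
Definition HP2 n m (P : nat -> (nat -> nat) -> bool) :=
  forall a, bounded n m a -> forall j j', j < n -> j' < n -> P j a -> P j' a -> j = j'.
Definition HP3 n m (P : nat -> (nat -> nat) -> bool) B :=
  forall a, bounded n m a ->
  \sum_(0 <= i < n) \sum_(0 <= j < n | j != i) \sum_(0 <= al < m)
     (P j (fun k => if k == i then al else a k) : nat) = B.

Lemma kap_bound n' m p (x : hvertex n'.+1 (m * p)) : 0 < p -> bounded n'.+1 m (kap p x).
Proof. by move=> hp k _; rewrite /kap ltn_divLR. Qed.

Lemma updv n' q (x : hvertex n'.+1 q) i v k : k < n'.+1 ->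
  upd x i v (inord k) = if k == val i then v else x (inord k).
Proof. by move=> hk; rewrite ffunE -val_eqE /= inordK. Qed.

Lemma Zsum n' m p s P (x : hvertex n'.+1 (m * p)) : 0 < p -> HP2 n'.+1 m P ->
  (ZZ p s P x : nat) = \sum_(j < n'.+1) (gg p s P j x : nat).
Proof.
move=> hp H2; rewrite /ZZ; case: (boolP [exists j, _]).
- move/existsP => [j0 Hj0]; rewrite (bigD1 j0) //= Hj0 big1 // => j Hj.
  case: (boolP (gg p s P j x)) => // Hg.
  move: Hg Hj0; rewrite /gg => /andP [Hg _] /andP [Hg0 _].
  have := H2 _ (kap_bound x hp) _ _ (ltn_ord j) (ltn_ord j0) Hg Hg0.
  by move/val_inj => E; rewrite E eqxx in Hj.
- move/existsPn => H; rewrite big1 // => j _; by rewrite (negbTE (H j)).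
Qed.

Lemma gg_same n' q p s P (x : hvertex n'.+1 q) i v : HP1 n'.+1 P ->
  gg p s P i (upd x i v) = gg p s P i x.
Proof.
move=> H1; rewrite /gg; congr (_ && _).
  apply: H1; first exact: ltn_ord.
  move=> k hk hki; rewrite /kap updv //; by rewrite (negbTE hki).
congr (_ %% p < s); rewrite /iot; apply: eq_bigr => k hk.
by rewrite ffunE (negbTE hk).
Qed.

Lemma gg_other n' m p s P (x : hvertex n'.+1 (m * p)) (i j : 'I_n'.+1) :
  0 < p -> s <= p -> HP1 n'.+1 P -> j != i ->
  \sum_(v < m * p) (gg p s P j (upd x i v) : nat) =
  s * \sum_(al < m) (P j (fun k => if k == val i then val al else kap p x k) : nat).
Proof.
move=> hp hs H1 hji.
set R := \sum_(k < n'.+1 | (k != j) && (k != i)) (x k %% p).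
pose F w := P j (fun k => if k == val i then w %/ p else kap p x k) && ((w %% p + R) %% p < s).
transitivity (\sum_(v < m * p) (F v : nat)).
  apply: eq_bigr => v _; rewrite /gg /F; congr (_ && _).
    apply: H1; first exact: ltn_ord.
    move=> k hk _; rewrite /kap updv //; by case: (k == val i).
  congr (_ %% p < s); rewrite /iot (bigD1 i) 1?eq_sym //= ffunE eqxx; congr (_ + _).
  by apply: eq_bigr => k /andP [_ hk]; rewrite ffunE (negbTE hk).
rewrite (sum_split m p (fun w => (F w : nat))) big_distrr /=; apply: eq_bigr => al _.
transitivity (\sum_(r < p) ((P j (fun k => if k == val i then val al else kap p x k)) * ((r + R) %% p < s) : nat)).
  apply: eq_bigr => r _; rewrite /F divnMDl // divn_small // addn0 modnMDl (modn_small (ltn_ord r)).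
  by case: (P _ _) => /=; rewrite ?mul1n ?mul0n.
case: (P _ _) => /=.
  under eq_bigr => r _ do rewrite mul1n.
  by rewrite sum_shift // muln1.
by rewrite big1 // muln0.
Qed.

Lemma HP3_ord n' m P B a : HP3 n'.+1 m P B -> bounded n'.+1 m a ->
  \sum_(i < n'.+1) \sum_(j < n'.+1 | j != i) \sum_(al < m)
     (P j (fun k => if k == val i then val al else a k) : nat) = B.
Proof.
move=> H3 Ha; rewrite -(H3 a Ha) big_mkord; apply: eq_bigr => i _.
rewrite big_mkord; apply: eq_big => // j.
by rewrite big_mkord.
Qed.

Lemma main_count n' m p s P B (x : hvertex n'.+1 (m * p)) :
  0 < p -> s <= p -> HP1 n'.+1 P -> HP2 n'.+1 m P -> HP3 n'.+1 m P B ->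
  #|[pred y | hadj x y && ZZ p s P y]| + n'.+1 * ZZ p s P x = m * p * ZZ p s P x + s * B.
Proof.
move=> hp hs H1 H2 H3.
rewrite (nbr_card x (fun y => ZZ p s P y)).
have -> : n'.+1 * ZZ p s P x = \sum_(i < n'.+1) (ZZ p s P x : nat).
  by rewrite sum_nat_const card_ord.
rewrite -big_split /=.
under eq_bigr => i _ do rewrite (cnt_split x (fun y => ZZ p s P y) i).
transitivity (\sum_(i < n'.+1) (m * p * gg p s P i x +
   s * \sum_(j < n'.+1 | j != i) \sum_(al < m)
     (P j (fun k => if k == val i then val al else kap p x k) : nat))).
  apply: eq_bigr => i _.
  rewrite card_sumb.
  under eq_bigr => v _ do rewrite (Zsum s _ hp H2).
  rewrite exchange_big /= (bigD1 i) //=; congr (_ + _).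
    under eq_bigr => v _ do rewrite (gg_same p s _ _ _ H1).
    by rewrite sum_nat_const card_ord.
  rewrite big_distrr /=; apply: eq_bigr => j hj.
  by apply: gg_other.
rewrite big_split /= -big_distrr -big_distrr /= -Zsum //.
by rewrite (HP3_ord H3 (kap_bound x hp)).
Qed.

Lemma lift_lt a m p : 0 < p -> a < m -> a * p < m * p.
Proof. by move=> hp ha; rewrite ltn_mul2r hp ha. Qed.

Lemma lift_ex n' m p s P (a : nat -> nat) : 0 < p -> 0 < s -> HP1 n'.+1 P -> bounded n'.+1 m a ->
  exists x : hvertex n'.+1 (m * p), ZZ p s P x = [exists j : 'I_n'.+1, P j a].
Proof.
move=> hp hs H1 Ha.
exists [ffun k : 'I_n'.+1 => Ordinal (lift_lt hp (Ha k (ltn_ord k)))].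
rewrite /ZZ; apply: eq_existsb => j; rewrite /gg.
have -> : iot p [ffun k : 'I_n'.+1 => Ordinal (lift_lt hp (Ha k (ltn_ord k)))] j = 0.
  by rewrite /iot big1 // => k _; rewrite ffunE /= modnMl.
rewrite mod0n hs andbT; apply: H1; first exact: ltn_ord.
by move=> k hk _; rewrite /kap ffunE /= inordK // mulnK.
Qed.

Theorem gen_col n' m p s P B c :
  0 < p -> 0 < s -> s <= p -> HP1 n'.+1 P -> HP2 n'.+1 m P -> HP3 n'.+1 m P B ->
  (exists a, bounded n'.+1 m a /\ forall j, j < n'.+1 -> ~~ P j a) ->
  (exists a j, [/\ bounded n'.+1 m a, j < n'.+1 & P j a]) ->
  c + (m * p + s * B) = n'.+1 * (m * p).-1 + n'.+1 ->
  exists f : hvertex n'.+1 (m * p) -> 'I_2, is_bc_coloring (s * B) c f.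
Proof.
move=> hp hs hsp H1 H2 H3 [a0 [Ha0 Hn0]] [a1 [j1 [Ha1 Hj1 HP1']]] Hc.
exists (fun x => if ZZ p s P x then ord_max else ord0).
have Hmax (y : hvertex n'.+1 (m * p)) : ((if ZZ p s P y then ord_max else ord0) == (ord_max : 'I_2)) = ZZ p s P y.
  by case: (ZZ p s P y).
have Hmin (y : hvertex n'.+1 (m * p)) : ((if ZZ p s P y then ord_max else ord0) == (ord0 : 'I_2)) = ~~ ZZ p s P y.
  by case: (ZZ p s P y).
split; [|split].
- case=> [[|[|//]] Hk].
  + have [x Hx] := lift_ex hp hs H1 Ha0.
    exists x; apply: val_inj; rewrite Hx /=.
    case: existsP => //= [[j Hj]]; by rewrite (negbTE (Hn0 j (ltn_ord j))) in Hj.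
  + have [x Hx] := lift_ex hp hs H1 Ha1.
    exists x; apply: val_inj; rewrite Hx /=.
    case: existsP => //= H; exfalso; apply: H; by exists (Ordinal Hj1).
- move=> x Hx.
  have Zx : ZZ p s P x = false by move: Hx; case: (ZZ p s P x).
  have := main_count x hp hsp H1 H2 H3; rewrite Zx /= => HN.
  have -> : #|[pred y | hadj x y && ((if ZZ p s P y then ord_max else ord0) == (ord_max : 'I_2))]| =
            #|[pred y | hadj x y && ZZ p s P y]|.
    by apply: eq_card => y; rewrite !inE Hmax.
  lia.
- move=> x Hx.
  have Zx : ZZ p s P x = true by move: Hx; case: (ZZ p s P x).
  have := main_count x hp hsp H1 H2 H3; rewrite Zx muln1 => HN.
  have Hd := deg_card x.
  have Hs : #|[pred y | hadj x y]| = #|[pred y | hadj x y && ZZ p s P y]| +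
                                     #|[pred y | hadj x y && ~~ ZZ p s P y]|.
    rewrite !card_sumb -big_split /=; apply: eq_bigr => y _.
    by case: (hadj x y); case: (ZZ p s P y).
  have -> : #|[pred y | hadj x y && ((if ZZ p s P y then ord_max else ord0) == (ord0 : 'I_2))]| =
            #|[pred y | hadj x y && ~~ ZZ p s P y]|.
    by apply: eq_card => y; rewrite !inE Hmin.
  lia.
Qed.

Definition L40 : seq (nat * nat * nat) := [:: (0,0,1); (0,0,2); (0,1,0); (0,1,2); (1,1,0); (2,0,1)].
Definition L41 : seq (nat * nat * nat) := [:: (0,1,1); (1,0,0); (2,0,0); (2,1,1); (2,2,0); (2,2,1)].
Definition L42 : seq (nat * nat * nat) := [:: (0,2,0); (0,2,2); (1,1,1); (1,1,2); (2,1,2); (2,2,2)].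
Definition L43 : seq (nat * nat * nat) := [:: (0,0,2); (0,1,0); (0,1,2); (1,0,2); (1,2,1); (1,2,2)].

Definition P4 (j : nat) (a : nat -> nat) : bool :=
  match j with
  | 0 => (a 1, a 2, a 3) \in L40
  | 1 => (a 0, a 2, a 3) \in L41
  | 2 => (a 0, a 1, a 3) \in L42
  | _ => (a 0, a 1, a 2) \in L43
  end.

Definition E4 (a : nat -> nat) : nat :=
  \sum_(0 <= i < 4) \sum_(0 <= j < 4 | j != i) \sum_(0 <= al < 3)
     (P4 j (fun k => if k == i then al else a k) : nat).
Definition D4 (a : nat -> nat) : bool :=
  all (fun j => all (fun j' => ~~ (P4 j a && P4 j' a) || (j == j')) (iota 0 4)) (iota 0 4).
Definition chk4 x0 x1 x2 x3 : bool :=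
  let a := fun k => nth 0 [:: x0; x1; x2; x3] k in (E4 a == 8) && D4 a.

Lemma chk4_all : all (fun x0 => all (fun x1 => all (fun x2 => all (fun x3 =>
   chk4 x0 x1 x2 x3) (iota 0 3)) (iota 0 3)) (iota 0 3)) (iota 0 3).
Proof. rewrite /chk4 /E4 /D4 !unlock. vm_compute. reflexivity. Qed.

Lemma all4 (f : nat -> nat -> nat -> nat -> bool) m :
  all (fun x0 => all (fun x1 => all (fun x2 => all (fun x3 => f x0 x1 x2 x3)
    (iota 0 m)) (iota 0 m)) (iota 0 m)) (iota 0 m) ->
  forall x0 x1 x2 x3, x0 < m -> x1 < m -> x2 < m -> x3 < m -> f x0 x1 x2 x3.
Proof.
move=> H x0 x1 x2 x3 h0 h1 h2 h3.
move/allP: H => /(_ x0); rewrite mem_iota h0 => /(_ isT).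
move/allP => /(_ x1); rewrite mem_iota h1 => /(_ isT).
move/allP => /(_ x2); rewrite mem_iota h2 => /(_ isT).
move/allP => /(_ x3); rewrite mem_iota h3 => /(_ isT).
by [].
Qed.

Lemma chk4_ok a : bounded 4 3 a -> chk4 (a 0) (a 1) (a 2) (a 3).
Proof. move=> Ha; apply: (all4 chk4_all); exact: Ha. Qed.

Lemma H1_4 : HP1 4 P4.
Proof.
move=> j hj a b.
by case: j hj => [|[|[|[|//]]]] _ /= Hab; rewrite ?Hab.
Qed.

Lemma H2_4 : HP2 4 3 P4.
Proof.
move=> a Ha j j' hj hj' Pj Pj'.
have /andP [_ HD] := chk4_ok Ha.
move/allP: HD => /(_ j); rewrite mem_iota hj => /(_ isT).
move/allP => /(_ j'); rewrite mem_iota hj' => /(_ isT).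
have -> : P4 j (fun k => nth 0 [:: a 0; a 1; a 2; a 3] k) = P4 j a by [].
have -> : P4 j' (fun k => nth 0 [:: a 0; a 1; a 2; a 3] k) = P4 j' a by [].
by rewrite Pj Pj' /= => /eqP.
Qed.

Lemma H3_4 : HP3 4 3 P4 8.
Proof.
move=> a Ha.
have /andP [HE _] := chk4_ok Ha.
move/eqP: HE => <-.
by [].
Qed.

Definition P3 (j : nat) (a : nat -> nat) : bool :=
  match j with
  | 0 => (a 1 == 0) && (a 2 == 1)
  | 1 => (a 2 == 0) && (a 0 == 1)
  | _ => (a 0 == 0) && (a 1 == 1)
  end.

Definition E3 (a : nat -> nat) : nat :=
  \sum_(0 <= i < 3) \sum_(0 <= j < 3 | j != i) \sum_(0 <= al < 2)
     (P3 j (fun k => if k == i then al else a k) : nat).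
Definition D3 (a : nat -> nat) : bool :=
  all (fun j => all (fun j' => ~~ (P3 j a && P3 j' a) || (j == j')) (iota 0 3)) (iota 0 3).
Definition chk3 x0 x1 x2 : bool :=
  let a := fun k => nth 0 [:: x0; x1; x2] k in (E3 a == 3) && D3 a.

Lemma chk3_all : all (fun x0 => all (fun x1 => all (fun x2 =>
   chk3 x0 x1 x2) (iota 0 2)) (iota 0 2)) (iota 0 2).
Proof. rewrite /chk3 /E3 /D3 !unlock. vm_compute. reflexivity. Qed.

Lemma chk3_ok a : bounded 3 2 a -> chk3 (a 0) (a 1) (a 2).
Proof.
move=> Ha; move/allP: chk3_all => /(_ (a 0)); rewrite mem_iota Ha // => /(_ isT).
move/allP => /(_ (a 1)); rewrite mem_iota Ha // => /(_ isT).
move/allP => /(_ (a 2)); rewrite mem_iota Ha // => /(_ isT).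
by [].
Qed.

Lemma H1_3 : HP1 3 P3.
Proof.
move=> j hj a b.
by case: j hj => [|[|[|//]]] _ /= Hab; rewrite ?Hab.
Qed.

Lemma H2_3 : HP2 3 2 P3.
Proof.
move=> a Ha j j' hj hj' Pj Pj'.
have /andP [_ HD] := chk3_ok Ha.
move/allP: HD => /(_ j); rewrite mem_iota hj => /(_ isT).
move/allP => /(_ j'); rewrite mem_iota hj' => /(_ isT).
have -> : P3 j (fun k => nth 0 [:: a 0; a 1; a 2] k) = P3 j a by [].
have -> : P3 j' (fun k => nth 0 [:: a 0; a 1; a 2] k) = P3 j' a by [].
by rewrite Pj Pj' /= => /eqP.
Qed.

Lemma H3_3 : HP3 3 2 P3 3.
Proof.
move=> a Ha.
have /andP [HE _] := chk3_ok Ha.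
exact: (eqP HE).
Qed.

Unset Implicit Arguments.
Theorem corollary2 (p t : nat) (hp : 0 < p) (ht : t < p) :
  ((exists f : hvertex 3 (2 * p) -> 'I_2,
      is_bc_coloring (3 * p - 3 * t) (p + 3 * t) f) /\
   main_eigenvalue 3 (2 * p) (3 * p - 3 * t) (p + 3 * t) = (Posz (2 * p) - 3)%R) /\
  ((exists f : hvertex 4 (3 * p) -> 'I_2,
      is_bc_coloring (8 * p - 8 * t) (p + 8 * t) f) /\
   main_eigenvalue 4 (3 * p) (8 * p - 8 * t) (p + 8 * t) = (Posz (3 * p) - 4)%R).
Proof.
have hs : 0 < p - t by lia.
have hsp : p - t <= p by lia.
split; split.
- have -> : 3 * p - 3 * t = (p - t) * 3 by lia.
  apply: (@gen_col 2 2 p (p - t) P3 3 (p + 3 * t) hp hs hsp H1_3 H2_3 H3_3).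
  + by exists (fun _ => 0); split => // [[|[|[|//]]]].
  + by exists (fun k => nth 0 [:: 0; 0; 1] k), 0; split => // [[|[|[|//]]]].
  + rewrite -subn1; lia.
- rewrite /main_eigenvalue; lia.
- have -> : 8 * p - 8 * t = (p - t) * 8 by lia.
  apply: (@gen_col 3 3 p (p - t) P4 8 (p + 8 * t) hp hs hsp H1_4 H2_4 H3_4).
  + by exists (fun _ => 0); split => // [[|[|[|[|//]]]]].
  + by exists (fun k => nth 0 [:: 0; 0; 0; 1] k), 0; split => // [[|[|[|[|//]]]]].
  + rewrite -subn1; lia.
- rewrite /main_eigenvalue; lia.
Qed.
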